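(* Let $(X_1,d_1)$, $(X_2,d_2)$ be proper CAT(0) spaces, let $\Gamma$ be an infinite group acting convex co-compactly by isometries on $X_1$ and on $X_2$ via homomorphisms $\rho_i:\Gamma\to\mathrm{Isom}(X_i)$, and suppose the diagonal action $\rho=(\rho_1,\rho_2)$ of $\Gamma$ on $X_1\times X_2$ is convex co-compact. Let $\alpha\in\Gamma$ be such that $\rho_i(\alpha)$ is a rank one isometry of $X_i$ for $i=1,2$. Let $\beta\in\Gamma$ be an infinite order element such that, for $i=1,2$, $\rho_i(\beta)$ fixes the attractive and the repulsive fixed points of $\rho_i(\alpha)$ in the visual boundary $\partial X_i$. Then $\mathrm{slp}(\rho(\beta))=\mathrm{slp}(\rho(\alpha))$.
   Context: $X_1\times X_2$ carries the product metric $\sqrt{d_1^2+d_2^2}$. Convex co-compact: properly discontinuous isometric action with a nonempty closed invariant convex subset having compact quotient. A hyperbolic isometry $g$ (displacement $d(x,gx)$ attains its infimum $\ell(g)>0$) has an axis, a $g$-invariant geodesic line where the displacement is minimal; $g$ is rank one if an axis $l_g$ has the contraction property (some $K>0$ bounds the diameter of the nearest-point projection to $l_g$ of any ball disjoint from $l_g$). A rank one isometry $g$ has two fixed points $g_\pm\in\partial X$ (the endpoints of its axis) with $g^n\to g_+$ uniformly on compact subsets of $\partial X\setminus\{g_-\}$ as $n\to\infty$; $g_+$ is attractive and $g_-$ repulsive. Slope: for a geodesic ray $r$ in $X_1\times X_2$ with projections $r_i$, $\mathrm{slp}(r)=\infty$ if $r_2$ is constant, otherwise $d_1(r_1(0),r_1(1))/d_2(r_2(0),r_2(1))$;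 for a line $l$, $\mathrm{slp}(l)=\mathrm{slp}(l|_{[0,\infty)})$; for a hyperbolic isometry $g$ of $X_1\times X_2$, $\mathrm{slp}(g)$ is the slope of any of its axes. *)

(* Defs.v *)
From Stdlib Require Import Reals List ClassicalEpsilon.
Open Scope R_scope.
Set Implicit Arguments.

Record Group := {
  gcar :> Type;
  gmul : gcar -> gcar -> gcar;
  gone : gcar;
  ginv : gcar -> gcar;
  gmulA : forall a b c, gmul a (gmul b c) = gmul (gmul a b) c;
  gmul1 : forall a, gmul gone a = a;
  gmulV : forall a, gmul (ginv a) a = gone
}.

Fixpoint gpow (G : Group) (g : G) (n : nat) : G :=
  match n with O => gone G | S m => gmul G g (@gpow G g m) end.

Definition infinite_group (G : Group) : Prop :=
  forall l : list G, exists g : G, ~ In g l.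

Definition infinite_order {G : Group} (g : G) : Prop :=
  forall n : nat, (0 < n)%nat -> @gpow G g n <> gone G.

Definition finite_set {T : Type} (P : T -> Prop) : Prop :=
  exists l : list T, forall x, P x -> In x l.

Section Metric.
Variables (T : Type) (d : T -> T -> R).

Definition is_metric : Prop :=
  (forall x y, 0 <= d x y) /\ (forall x y, d x y = 0 <-> x = y) /\
  (forall x y, d x y = d y x) /\ (forall x y z, d x z <= d x y + d y z).

Definition geod_segment (c : R -> T) (x y : T) : Prop :=
  c 0 = x /\ c 1 = y /\
  forall s t, 0 <= s <= 1 -> 0 <= t <= 1 -> d (c s) (c t) = Rabs (s - t) * d x y.

(** CAT(0): geodesic metric space where every geodesic triangle satisfies the
    CAT(0) comparison inequality (points on two sides [x,y], [x,z], compared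
    with the Euclidean comparison triangle). *)
Definition CAT0 : Prop :=
  is_metric /\ (forall x y, exists c, geod_segment c x y) /\
  forall x y z c1 c2, geod_segment c1 x y -> geod_segment c2 x z ->
  forall s t, 0 <= s <= 1 -> 0 <= t <= 1 ->
    (d (c1 s) (c2 t)) ^ 2 <=
      s ^ 2 * (d x y) ^ 2 + t ^ 2 * (d x z) ^ 2
      - s * t * ((d x y) ^ 2 + (d x z) ^ 2 - (d y z) ^ 2).

Definition converges (u : nat -> T) (x : T) : Prop :=
  forall eps, 0 < eps -> exists N, forall n, (N <= n)%nat -> d (u n) x < eps.

Definition compact (K : T -> Prop) : Prop :=
  forall u : nat -> T, (forall n, K (u n)) ->
  exists (phi : nat -> nat) (x : T),
    (forall n m, (n < m)%nat -> (phi n < phi m)%nat) /\ K x /\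
    converges (fun n => u (phi n)) x.

Definition proper_space : Prop :=
  forall x r, compact (fun y => d x y <= r).

Definition closed_set (C : T -> Prop) : Prop :=
  forall u x, (forall n, C (u n)) -> converges u x -> C x.

Definition convex_set (C : T -> Prop) : Prop :=
  forall x y c, C x -> C y -> geod_segment c x y ->
  forall t, 0 <= t <= 1 -> C (c t).

Definition isometric_action {G : Group} (act : G -> T -> T) : Prop :=
  (forall x, act (gone G) x = x) /\
  (forall g h x, act (gmul G g h) x = act g (act h x)) /\
  (forall g x y, d (act g x) (act g y) = d x y).

Definition properly_discontinuous {G : Group} (act : G -> T -> T) : Prop :=
  forall K, compact K -> finite_set (fun g : G => exists x, K x /\ K (act g x)).

(** compact quotient C/Gamma: a compact subset K of C whose translates cover C *)
Definition convex_cocompact {G : Group} (act : G -> T -> T) : Prop :=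
  isometric_action act /\ properly_discontinuous act /\
  exists C : T -> Prop,
    (exists x, C x) /\ closed_set C /\ convex_set C /\
    (forall g x, C x -> C (act g x)) /\
    exists K, compact K /\ (forall x, K x -> C x) /\
      forall x, C x -> exists g y, K y /\ x = act g y.

Definition geod_line (l : R -> T) : Prop :=
  forall s t, d (l s) (l t) = Rabs (s - t).

Definition hyperbolic (f : T -> T) : Prop :=
  exists x0, 0 < d x0 (f x0) /\ forall x, d x0 (f x0) <= d x (f x).

Definition is_axis (f : T -> T) (l : R -> T) : Prop :=
  geod_line l /\ (forall t, exists s, f (l t) = l s) /\
  forall t x, d (l t) (f (l t)) <= d x (f x).

Definition is_proj (l : R -> T) (y : T) (t : R) : Prop :=
  forall s, d y (l t) <= d y (l s).

Definition contracting (l : R -> T) : Prop :=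
  exists K, 0 < K /\
  forall x r, (forall t, r <= d x (l t)) ->
  forall y1 y2 t1 t2, d x y1 < r -> d x y2 < r ->
    is_proj l y1 t1 -> is_proj l y2 t2 -> d (l t1) (l t2) <= K.

Definition rank_one (f : T -> T) : Prop :=
  hyperbolic f /\ exists l, is_axis f l /\ contracting l.

(** Rays r, r' : [0,oo) -> T define the same boundary point *)
Definition asymptotic (r r' : R -> T) : Prop :=
  exists C, forall t, 0 <= t -> d (r t) (r' t) <= C.

Definition fixes_axis_endpoints (f h : T -> T) : Prop :=
  exists l, is_axis f l /\
    asymptotic (fun t => h (l t)) l /\
    asymptotic (fun t => h (l (- t))) (fun t => l (- t)).
End Metric.

Definition dprod {X1 X2 : Type} (d1 : X1 -> X1 -> R) (d2 : X2 -> X2 -> R)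
  (p q : X1 * X2) : R :=
  sqrt ((d1 (fst p) (fst q)) ^ 2 + (d2 (snd p) (snd q)) ^ 2).

Definition diag_act {G : Group} {X1 X2 : Type} (a1 : G -> X1 -> X1)
  (a2 : G -> X2 -> X2) (g : G) (p : X1 * X2) : X1 * X2 :=
  (a1 g (fst p), a2 g (snd p)).

(** Slope of a line in X1 x X2; None stands for +infinity *)
Definition slp {X1 X2 : Type} (d1 : X1 -> X1 -> R) (d2 : X2 -> X2 -> R)
  (l : R -> X1 * X2) : option R :=
  match excluded_middle_informative
          (forall t, 0 <= t -> snd (l t) = snd (l 0)) with
  | left _ => None
  | right _ => Some (d1 (fst (l 0)) (fst (l 1)) / d2 (snd (l 0)) (snd (l 1)))
  end.

(* Main.v *)
Require Import Defs.
From Stdlib Require Import Reals Lra Lia Psatz ClassicalEpsilon Classical List ZArith.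
Open Scope R_scope.

Lemma abs_eq_sq x y : Rabs x = Rabs y -> x^2 = y^2.
Proof.
  intro H. assert (Rsqr x = Rsqr y) by (rewrite (Rsqr_abs x), (Rsqr_abs y), H; auto).
  unfold Rsqr in *. nra.
Qed.

Lemma sq_eq_nonneg a b : 0 <= a -> 0 <= b -> a^2 = b^2 -> a = b.
Proof. intros. nra. Qed.

Lemma sq_le_nonneg a b : 0 <= a -> 0 <= b -> a^2 <= b^2 -> a <= b.
Proof. intros. nra. Qed.

Lemma nat_mul_bounded a C : (forall k : nat, INR k * a <= C) -> a <= 0.
Proof.
  intros H. destruct (Rle_lt_dec a 0) as [h|h]; auto.
  destruct (INR_archimed a C h) as [n Hn]. specialize (H n). lra.
Qed.

Lemma nat_mul_eq X Y E : (forall k : nat, Rabs (INR k * X - INR k * Y) <= E) -> X = Y.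
Proof.
  intros H.
  assert (X - Y <= 0).
  { apply (nat_mul_bounded _ E). intro k. specialize (H k).
    unfold Rabs in H; destruct Rcase_abs in H; lra. }
  assert (Y - X <= 0).
  { apply (nat_mul_bounded _ E). intro k. specialize (H k).
    unfold Rabs in H; destruct Rcase_abs in H; lra. }
  lra.
Qed.

Lemma abs_one_sq u t e : Rabs u = Rabs t -> Rabs (u - e) = Rabs (t - 1) -> Rabs e = 1 -> u = t * e.
Proof.
  intros H1 H2 H3.
  apply abs_eq_sq in H1. apply abs_eq_sq in H2.
  assert (e^2 = 1). { rewrite <- (Rabs_R1) in H3. apply abs_eq_sq in H3. lra. }
  assert (u * e = t) by nra.
  assert (u = u * (e^2)) by (rewrite H; ring). nra.
Qed.

Lemma exists_int_near s tau : tau <> 0 -> exists n : nat,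
  Rabs (s - INR n * tau) <= Rabs tau \/ Rabs (s + INR n * tau) <= Rabs tau.
Proof.
  intros Ht.
  destruct (archimed (s / tau)) as [A1 A2].
  set (J := (up (s / tau) - 1)%Z).
  assert (HJ : 0 <= s / tau - IZR J <= 1).
  { unfold J. rewrite minus_IZR. simpl. lra. }
  assert (Hs : Rabs (s - IZR J * tau) <= Rabs tau).
  { replace (s - IZR J * tau) with ((s / tau - IZR J) * tau) by (field; auto).
    rewrite Rabs_mult. rewrite (Rabs_right (s/tau - IZR J)) by lra.
    assert (0 <= Rabs tau) by apply Rabs_pos. nra. }
  destruct (Z.le_gt_cases 0 J) as [h|h].
  - exists (Z.to_nat J). left. rewrite INR_IZR_INZ, Z2Nat.id; auto.
  - exists (Z.to_nat (- J)). right. rewrite INR_IZR_INZ, Z2Nat.id by lia.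
    rewrite opp_IZR. replace (s + - IZR J * tau) with (s - IZR J * tau) by ring. auto.
Qed.

Fixpoint itr {T : Type} (f : T -> T) (n : nat) (x : T) : T :=
  match n with O => x | S m => f (itr f m x) end.

Lemma iter_add {T} (f : T -> T) n m x : itr f (n + m) x = itr f n (itr f m x).
Proof. induction n; simpl; auto. rewrite IHn; auto. Qed.

Lemma iter_mul {T} (f : T -> T) n k x : itr f (k * n) x = itr (itr f n) k x.
Proof. induction k; simpl; auto. rewrite iter_add, IHk. auto. Qed.

Section Met.
Variables (T : Type) (d : T -> T -> R).
Hypothesis Hm : is_metric d.

Lemma dnn x y : 0 <= d x y. Proof. apply Hm. Qed.
Lemma d0 x : d x x = 0. Proof. apply Hm; auto. Qed.
Lemma deq x y : d x y = 0 -> x = y. Proof. apply Hm. Qed.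
Lemma dsym x y : d x y = d y x. Proof. apply Hm. Qed.
Lemma dtri x y z : d x z <= d x y + d y z. Proof. apply Hm. Qed.

Lemma line_inj l s s' : geod_line d l -> l s = l s' -> s = s'.
Proof.
  intros Hl E. specialize (Hl s s'). rewrite E, d0 in Hl.
  unfold Rabs in Hl; destruct Rcase_abs in Hl; lra.
Qed.

Lemma iso_inj (f : T -> T) : (forall x y, d (f x) (f y) = d x y) ->
  forall x y, f x = f y -> x = y.
Proof. intros Hf x y E. apply deq. rewrite <- Hf, E. apply d0. Qed.

Lemma iter_iso (f : T -> T) : (forall x y, d (f x) (f y) = d x y) ->
  forall n x y, d (itr f n x) (itr f n y) = d x y.
Proof. intros Hf n; induction n; simpl; intros; auto. rewrite Hf; auto. Qed.

Lemma iter_comm (f : T -> T) n x : itr f n (f x) = f (itr f n x).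
Proof. induction n; simpl; auto. rewrite IHn; auto. Qed.

Lemma iter_disp (f : T -> T) : (forall x y, d (f x) (f y) = d x y) ->
  forall n x, d x (itr f n x) <= INR n * d x (f x).
Proof.
  intros Hf n; induction n; intros x; simpl itr.
  - rewrite d0. simpl. lra.
  - rewrite S_INR.
    pose proof (dtri x (itr f n x) (f (itr f n x))).
    assert (E : d (itr f n x) (f (itr f n x)) = d x (f x)).
    { rewrite <- iter_comm. apply iter_iso; auto. }
    specialize (IHn x). lra.
Qed.

Lemma axis_translation (f : T -> T) (l : R -> T) :
  (forall x y, d (f x) (f y) = d x y) -> hyperbolic d f -> is_axis d f l ->
  exists tau, tau <> 0 /\ forall t, f (l t) = l (t + tau).
Proof.
  intros Hf [x0 [Hx0 Hmin]] [Hl [Hinv Hax]].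
  destruct (Hinv 0) as [s0 E0]. destruct (Hinv 1) as [s1 E1].
  assert (key : forall t st, f (l t) = l st -> st - s0 = t * (s1 - s0)).
  { intros t st Et. apply abs_one_sq.
    - rewrite <- (Hl st s0), <- Et, <- E0, Hf, Hl. rewrite Rminus_0_r; auto.
    - replace (st - s0 - (s1 - s0)) with (st - s1) by ring.
      rewrite <- Hl, <- Et, <- E1, Hf, Hl. auto.
    - rewrite <- Hl, <- E1, <- E0, Hf, Hl. rewrite Rminus_0_r; apply Rabs_R1. }
  assert (He : Rabs (s1 - s0) = 1).
  { rewrite <- Hl, <- E1, <- E0, Hf, Hl. replace (1-0) with 1 by ring. apply Rabs_R1. }
  assert (fixc : forall t, f (l t) = l t -> False).
  { intros t Et. specialize (Hmin (l t)). rewrite Et, d0 in Hmin. lra. }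
  destruct (Rcase_abs (s1 - s0)) as [h|h].
  - rewrite Rabs_left in He by lra. exfalso.
    destruct (Hinv (s0/2)) as [st Et]. pose proof (key _ _ Et) as K.
    assert (st = s0/2) by nra. subst st. apply (fixc _ Et).
  - rewrite Rabs_right in He by lra. exists s0. split.
    + intro Z. subst s0. apply (fixc 0). rewrite E0. auto.
    + intro t. destruct (Hinv t) as [st Et]. pose proof (key _ _ Et) as K.
      rewrite Et. f_equal. nra.
Qed.
End Met.

Section Grp.
Variable G : Group.
Lemma gmulV_r (a : G) : gmul G a (ginv G a) = gone G.
Proof.
  transitivity (gmul G (ginv G (ginv G a)) (gmul G (ginv G a) (gmul G a (ginv G a)))).
  - rewrite gmulA, gmulV, gmul1; auto.
  - rewrite (gmulA G (ginv G a) a). rewrite gmulV, gmul1. apply gmulV.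
Qed.
Lemma gmul1_r (a : G) : gmul G a (gone G) = a.
Proof. rewrite <- (gmulV G a), gmulA, gmulV_r, gmul1. auto. Qed.
Lemma gpow_add (g : G) n m : gpow G g (n + m) = gmul G (gpow G g n) (gpow G g m).
Proof. induction n; simpl. rewrite gmul1; auto. rewrite IHn, gmulA; auto. Qed.
Lemma gcancel (X P : G) : gmul G X P = P -> X = gone G.
Proof.
  intro H. rewrite <- (gmul1_r X), <- (gmulV_r P), gmulA, H. reflexivity.
Qed.
Lemma finite_order_of (g : G) i j : (i < j)%nat -> gpow G g i = gpow G g j -> ~ infinite_order g.
Proof.
  intros Hij E Hinf. apply (Hinf (j - i)%nat). lia.
  apply (gcancel _ (gpow G g i)). rewrite <- gpow_add.
  replace (j - i + i)%nat with j by lia. auto.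
Qed.
End Grp.

Section Act.
Variables (G : Group) (T : Type) (d : T -> T -> R) (act : G -> T -> T).
Hypothesis Hm : is_metric d.
Hypothesis Ha : isometric_action d act.

Lemma act_one x : act (gone G) x = x. Proof. apply Ha. Qed.
Lemma act_mul g h x : act (gmul G g h) x = act g (act h x). Proof. apply Ha. Qed.
Lemma act_iso g x y : d (act g x) (act g y) = d x y. Proof. apply Ha. Qed.
Lemma act_gpow g n x : act (gpow G g n) x = itr (act g) n x.
Proof. induction n; simpl. apply act_one. rewrite act_mul, IHn; auto. Qed.
Lemma act_inv_l g x : act (ginv G g) (act g x) = x.
Proof. rewrite <- act_mul, gmulV. apply act_one. Qed.
Lemma act_inv_r g x : act g (act (ginv G g) x) = x.
Proof. rewrite <- act_mul, gmulV_r. apply act_one. Qed.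
Lemma act_inj g x y : act g x = act g y -> x = y.
Proof. intro E. rewrite <- (act_inv_l g x), E. apply act_inv_l. Qed.
Lemma iter_act_surj g n y : exists z, itr (act g) n z = y.
Proof.
  exists (itr (act (ginv G g)) n y). induction n. auto.
  change (itr (act (ginv G g)) (S n) y) with (act (ginv G g) (itr (act (ginv G g)) n y)).
  simpl. rewrite <- (iter_comm _ (act g) n). rewrite act_inv_r. auto.
Qed.
End Act.

Section Cat.
Variables (T : Type) (d : T -> T -> R).
Hypothesis Hc : CAT0 d.

Lemma cat_met : is_metric d. Proof. apply Hc. Qed.
Hint Resolve cat_met : core.

Lemma seg_rev c x y : geod_segment d c x y -> geod_segment d (fun v => c (1 - v)) y x.
Proof.
  intros [H0 [H1 H]]. split; [|split].
  - rewrite Rminus_0_r. auto.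
  - rewrite Rminus_diag. auto.
  - intros s t Hs Ht. rewrite H by lra. rewrite (dsym _ _ cat_met x y).
    f_equal. replace (1 - s - (1 - t)) with (- (s - t)) by ring. apply Rabs_Ropp.
Qed.

Lemma line_seg l a b : geod_line d l -> geod_segment d (fun u => l (a + u * (b - a))) (l a) (l b).
Proof.
  intros Hl. split; [|split].
  - f_equal. ring.
  - f_equal. ring.
  - intros s t _ _. rewrite !Hl. 
    replace (a + s * (b - a) - (a + t * (b - a))) with ((s - t) * (b - a)) by ring.
    rewrite Rabs_mult. f_equal. replace (a - b) with (- (b - a)) by ring.
    rewrite Rabs_Ropp. auto.
Qed.

Lemma sqle_le a b : 0 <= a -> 0 <= b -> a^2 <= b^2 -> a <= b.
Proof. intros. nra. Qed.

Lemma seg_conv g g' x y x' y' u : geod_segment d g x y -> geod_segment d g' x' y' ->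
  0 <= u <= 1 -> d (g u) (g' u) <= (1 - u) * d x x' + u * d y y'.
Proof.
  intros Hg Hg' Hu. destruct Hc as [Hmet [Hgeo Hcat]].
  destruct (Hgeo x y') as [e He].
  assert (A1 : d (g u) (e u) <= u * d y y').
  { pose proof (Hcat x y y' g e Hg He u u Hu Hu) as K.
    apply sqle_le. apply dnn; auto. apply Rmult_le_pos. lra. apply dnn; auto.
    eapply Rle_trans; [exact K| right; ring]. }
  assert (A2 : d (e u) (g' u) <= (1 - u) * d x x').
  { pose proof (Hcat y' x x' _ _ (seg_rev _ _ _ He) (seg_rev _ _ _ Hg') (1 - u) (1 - u)) as K.
    cbv beta in K. replace (1 - (1 - u)) with u in K by ring.
    assert (0 <= 1 - u <= 1) by lra. specialize (K H H).
    apply sqle_le. apply dnn; auto. apply Rmult_le_pos. lra. apply dnn; auto.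
    eapply Rle_trans; [exact K| right; ring]. }
  pose proof (dtri _ _ cat_met (g u) (e u) (g' u)). lra.
Qed.

Definition convexf (f : R -> R) := forall p q lam, 0 <= lam <= 1 ->
  f ((1 - lam) * p + lam * q) <= (1 - lam) * f p + lam * f q.

Lemma lines_conv c c' : geod_line d c -> geod_line d c' -> convexf (fun t => d (c t) (c' t)).
Proof.
  intros H H' p q lam Hl.
  pose proof (seg_conv _ _ _ _ _ _ lam (line_seg c p q H) (line_seg c' p q H') Hl) as K.
  simpl in K. replace ((1 - lam) * p + lam * q) with (p + lam * (q - p)) by ring. auto.
Qed.

Lemma conv_bounded_const f M : convexf f -> (forall t, Rabs (f t) <= M) -> forall a b, f a = f b.
Proof.
  intros Hf HM.
  assert (K : forall a b, f a < f b -> False).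
  { intros a b Hab.
    set (mu := Rmax 1 ((2 * M + 1) / (f b - f a))).
    assert (Hmu1 : 1 <= mu) by apply Rmax_l.
    assert (Hmu2 : (2 * M + 1) / (f b - f a) <= mu) by apply Rmax_r.
    set (x := a + mu * (b - a)).
    pose proof (Hf a x (/ mu)) as K.
    assert (0 < / mu) by (apply Rinv_0_lt_compat; lra).
    assert (/ mu <= 1). { rewrite <- Rinv_1. apply Rinv_le_contravar; lra. }
    specialize (K (conj (Rlt_le _ _ H) H0)).
    replace ((1 - / mu) * a + / mu * x) with b in K
      by (unfold x; field; lra).
    assert (f b - f a <= / mu * (f x - f a)) by lra.
    assert (mu * (f b - f a) <= f x - f a).
    { apply (Rmult_le_compat_l mu) in H1; [|lra]. rewrite <- Rmult_assoc, Rinv_r in H1 by lra. lra. }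
    assert ((2 * M + 1) <= mu * (f b - f a)).
    { apply (Rmult_le_compat_r (f b - f a)) in Hmu2; [|lra].
      unfold Rdiv in Hmu2. rewrite Rmult_assoc, Rinv_l in Hmu2 by lra. lra. }
    pose proof (HM x). pose proof (HM a).
    unfold Rabs in H4, H5; destruct Rcase_abs in H4; destruct Rcase_abs in H5; lra. }
  intros a b. destruct (Rtotal_order (f a) (f b)) as [h|[h|h]]; auto.
  exfalso; eauto. exfalso; eauto.
Qed.
End Cat.

Lemma lip_cont (f : R -> R) x : (forall a b, Rabs (f a - f b) <= Rabs (a - b)) -> continuity_pt f x.
Proof.
  intros Hf eps Heps. exists eps. split; auto.
  intros y [_ Hy]. simpl in *. unfold R_dist in *.
  eapply Rle_lt_trans; [apply Hf| auto].
Qed.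

Section RankOne.
Variables (T : Type) (d : T -> T -> R).
Hypothesis Hc : CAT0 d.
Let Hm : is_metric d := cat_met _ _ Hc.

Lemma shift_line l s : geod_line d l -> geod_line d (fun t => l (t + s)).
Proof. intros H a b. rewrite H. f_equal. ring. Qed.

Lemma abs_tri_d x y z : Rabs (d x z - d y z) <= d x y.
Proof.
  pose proof (dtri _ _ Hm x y z). pose proof (dtri _ _ Hm y x z).
  rewrite (dsym _ _ Hm y x) in H0.
  unfold Rabs; destruct Rcase_abs; lra.
Qed.

Lemma parallel_const c l M : geod_line d c -> geod_line d l ->
  (forall t, d (c t) (l t) <= M) ->
  forall u s, d (c u) (l s) = d (c 0) (l (s - u)).
Proof.
  intros Hcl Hl HM u s.
  set (sg := s - u).
  assert (Hcv := lines_conv _ _ Hc c (fun t => l (t + sg)) Hcl (shift_line l sg Hl)).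
  assert (Hb : forall t, Rabs (d (c t) (l (t + sg))) <= M + Rabs sg).
  { intro t. rewrite Rabs_right by (apply Rle_ge, dnn; auto).
    pose proof (dtri _ _ Hm (c t) (l t) (l (t + sg))). rewrite Hl in H.
    replace (t - (t + sg)) with (- sg) in H by ring. rewrite Rabs_Ropp in H.
    specialize (HM t). lra. }
  pose proof (conv_bounded_const _ _ Hcv Hb u 0) as K. cbv beta in K.
  replace (u + sg) with s in K by (unfold sg; ring).
  replace (0 + sg) with (s - u) in K by (unfold sg; ring). auto.
Qed.

Lemma rank_one_close l : geod_line d l -> contracting d l ->
  exists K, 0 < K /\ forall c, geod_line d c ->
  (exists M, forall t, d (c t) (l t) <= M) -> exists s, d (c 0) (l s) <= K.
Proof.
  intros Hl [K [HK Hcon]].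
  exists K. split; auto. intros c Hcl [M HM].
  pose proof (parallel_const _ _ _ Hcl Hl HM) as P.
  set (h := fun s => d (c 0) (l s)).
  assert (Hlip : forall a b, Rabs (h a - h b) <= Rabs (a - b)).
  { intros a b. unfold h. rewrite (dsym _ _ Hm (c 0) (l a)), (dsym _ _ Hm (c 0) (l b)).
    rewrite <- (Hl a b). apply abs_tri_d. }
  set (R0 := 2 * h 0).
  assert (h0 : 0 <= h 0) by (apply dnn; auto).
  destruct (continuity_ab_min h (- R0) R0) as [sm [Hsm Hsmr]].
  { unfold R0. lra. }
  { intros; apply lip_cont; auto. }
  assert (Hmin : forall s, h sm <= h s).
  { intro s. destruct (Rle_dec (Rabs s) R0) as [hs|hs].
    - apply Hsm. unfold Rabs in hs; destruct Rcase_abs in hs; lra.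
    - assert (h sm <= h 0) by (apply Hsm; unfold R0; lra).
      assert (Rabs s <= h 0 + h s).
      { pose proof (dtri _ _ Hm (l 0) (c 0) (l s)). rewrite Hl in H0.
        rewrite (dsym _ _ Hm (l 0) (c 0)) in H0. unfold h.
        replace (0 - s) with (- s) in H0 by ring. rewrite Rabs_Ropp in H0. lra. }
      unfold R0 in hs. lra. }
  destruct (Rle_dec (h sm) K) as [hk|hk].
  { exists sm. auto. }
  exfalso.

  assert (Hproj : forall u, is_proj d l (c u) (u + sm)).
  { intros u s. rewrite (P u (u + sm)), (P u s). replace (u + sm - u) with sm by ring. apply Hmin. }
  assert (Hball : forall t, h sm <= d (c 0) (l t)) by (intro; apply Hmin).
  set (w := h sm) in *. 
  set (th := (K / 2 + w) / 2).
  assert (Hth1 : 0 < th) by (unfold th; lra).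
  assert (Hth2 : th < w) by (unfold th; lra).
  assert (Hth3 : K < 2 * th) by (unfold th; lra).
  pose proof (Hcon (c 0) w Hball (c (- th)) (c th) (- th + sm) (th + sm)) as K1.
  assert (E1 : d (c 0) (c (- th)) < w).
  { rewrite Hcl. rewrite Rminus_0_l, Ropp_involutive, Rabs_right; lra. }
  assert (E2 : d (c 0) (c th) < w).
  { rewrite Hcl. rewrite Rminus_0_l, Rabs_Ropp, Rabs_right; lra. }
  specialize (K1 E1 E2 (Hproj _) (Hproj _)).
  rewrite Hl in K1. replace (- th + sm - (th + sm)) with (- (2 * th)) in K1 by ring.
  rewrite Rabs_Ropp, Rabs_right in K1 by lra. lra.
Qed.
End RankOne.

Lemma pigeon_inf {A : Type} (L : list A) : forall (f : nat -> A) M,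
  (forall n, (M <= n)%nat -> In (f n) L) ->
  exists a, forall N, exists n, (N <= n)%nat /\ f n = a.
Proof.
  induction L as [|a L IH]; intros f M H.
  - exfalso. apply (H M). lia.
  - destruct (classic (forall N, exists n, (N <= n)%nat /\ f n = a)) as [h|h].
    + exists a. auto.
    + apply not_all_ex_not in h. destruct h as [N0 hN].
      apply (IH f (Nat.max M N0)). intros n Hn.
      destruct (H n ltac:(lia)) as [e|e]; auto.
      exfalso. apply hN. exists n. split; auto. lia.
Qed.

Lemma pigeon2 {A : Type} (L : list A) (f : nat -> A) :
  (forall n, In (f n) L) -> exists i j, (i < j)%nat /\ f i = f j.
Proof.
  intros H. destruct (pigeon_inf L f 0 (fun n _ => H n)) as [a Ha].
  destruct (Ha 0%nat) as [i [_ Hi]]. destruct (Ha (S i)) as [j [Hj1 Hj]].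
  exists i, j. split. lia. congruence.
Qed.

Lemma incr_ge (phi : nat -> nat) : (forall n m, (n < m)%nat -> (phi n < phi m)%nat) ->
  forall n, (n <= phi n)%nat.
Proof.
  intros H n. induction n. lia. specialize (H n (S n) ltac:(lia)). lia.
Qed.

Lemma choice_fun {A B : Type} (P : A -> B -> Prop) : (forall a, exists b, P a b) ->
  exists f : A -> B, forall a, P a (f a).
Proof.
  intros H. exists (fun a => proj1_sig (constructive_indefinite_description _ (H a))).
  intro a. exact (proj2_sig (constructive_indefinite_description _ (H a))).
Qed.

Section Cpt.
Variables (T : Type) (d : T -> T -> R).
Hypothesis Hm : is_metric d.

Lemma compact_bounded K : Defs.compact d K -> forall x0, exists R, forall x, K x -> d x0 x <= R.
Proof.
  intros HK x0. apply NNPP. intro Hn.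
  assert (H : forall n : nat, exists x, K x /\ INR n < d x0 x).
  { intro n. apply NNPP. intro h. apply Hn. exists (INR n). intros x Kx.
    apply Rnot_lt_le. intro. apply h. eauto. }
  apply choice_fun in H. destruct H as [u Hu].
  destruct (HK u (fun n => proj1 (Hu n))) as [phi [x [Hphi [Kx Hc]]]].
  destruct (Hc 1 Rlt_0_1) as [N HN].
  destruct (INR_archimed 1 (d x0 x + 1) Rlt_0_1) as [n Hn1].
  set (k := Nat.max N n).
  specialize (HN k ltac:(unfold k; lia)).
  pose proof (proj2 (Hu (phi k))). pose proof (incr_ge phi Hphi k).
  apply le_INR in H0. assert (INR n <= INR k) by (apply le_INR; unfold k; lia).
  pose proof (dtri _ _ Hm x0 x (u (phi k))). rewrite (dsym _ _ Hm x (u (phi k))) in H2.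
  lra.
Qed.

Lemma singleton_compact y : Defs.compact d (fun x => x = y).
Proof.
  intros u Hu. exists (fun n => n), y. split; [|split]; auto.
  intros eps He. exists 0%nat. intros n _. rewrite Hu. rewrite d0; auto.
Qed.
End Cpt.

Lemma seg_image {T} (d : T -> T -> R) (F : T -> T) c x z :
  (forall a b, d (F a) (F b) = d a b) -> geod_segment d c x z ->
  geod_segment d (fun u => F (c u)) (F x) (F z).
Proof.
  intros HF [H0 [H1 H]]. split; [|split].
  rewrite H0; auto. rewrite H1; auto. intros. rewrite HF, H by auto. rewrite HF. auto.
Qed.

Lemma pow2_ge k : INR k <= 2 ^ k.
Proof.
  induction k. simpl; lra. rewrite S_INR. simpl.
  assert (1 <= 2 ^ k) by (apply pow_R1_Rle; lra). lra.
Qed.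

Section SS.
Variables (G : Group) (T : Type) (d : T -> T -> R) (act : G -> T -> T) (beta : G).
Hypothesis Hc : CAT0 d.
Hypothesis Hp : proper_space d.
Hypothesis Ha : isometric_action d act.
Variable C : T -> Prop.
Hypothesis Hconv : convex_set d C.
Hypothesis Hinvar : forall g x, C x -> C (act g x).

Let Hm : is_metric d := cat_met _ _ Hc.
Let B := act beta.
Let HB : forall a b, d (B a) (B b) = d a b := act_iso _ _ _ _ Ha beta.

Lemma C_itr j x : C x -> C (itr B j x).
Proof. intro. unfold B. rewrite <- (act_gpow _ _ _ _ Ha). auto. Qed.

Lemma ss_step x j : C x -> exists y, C y /\ d y (itr B j y) <= d x (itr B (j + j) x) / 2.
Proof.
  intros Cx. pose proof Hc as [_ [Hgeo Hcat]].
  set (z := itr B j x).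
  destruct (Hgeo x z) as [c Hcs].
  exists (c (1/2)). split.
  - apply (Hconv x z c Cx (C_itr j x Cx) Hcs). lra.
  - pose proof (seg_image d (itr B j) c x z (iter_iso _ _ B HB j) Hcs) as Hs2.
    assert (E : itr B j z = itr B (j + j) x) by (unfold z; rewrite iter_add; auto).
    rewrite E in Hs2. fold z in Hs2.
    pose proof (Hcat z x (itr B (j + j) x) _ _ (seg_rev _ _ Hc _ _ _ Hcs) Hs2 (1/2) (1/2)) as K.
    cbv beta in K. replace (1 - 1/2) with (1/2) in K by field.
    assert (0 <= 1/2 <= 1) by lra. specialize (K H H).
    apply sqle_le. apply dnn; auto. apply Rmult_le_pos. apply dnn; auto. lra.
    eapply Rle_trans; [exact K| right; field].
Qed.

Lemma ss_iter k : forall x, C x -> exists y, C y /\ d y (B y) * 2 ^ k <= d x (itr B (2 ^ k)%nat x).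
Proof.
  induction k; intros x Cx.
  - exists x. split; auto. simpl. lra.
  - destruct (ss_step x (2 ^ k)%nat Cx) as [x' [Cx' Hx']].
    destruct (IHk x' Cx') as [y [Cy Hy]].
    exists y. split; auto.
    replace (2 ^ S k)%nat with (2 ^ k + 2 ^ k)%nat by (simpl; lia).
    simpl pow. lra.
Qed.

Lemma ss_approx x0 : C x0 -> forall y eps, 0 < eps -> exists y', C y' /\ d y' (B y') <= d y (B y) + eps.
Proof.
  intros Cx0 y eps He.
  set (D0 := d x0 y).
  assert (Hn : forall n, d x0 (itr B n x0) <= 2 * D0 + INR n * d y (B y)).
  { intro n. pose proof (dtri _ _ Hm x0 y (itr B n x0)).
    pose proof (dtri _ _ Hm y (itr B n y) (itr B n x0)).
    rewrite (iter_iso _ _ B HB) in H0. rewrite (dsym _ _ Hm y x0) in H0.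
    pose proof (iter_disp _ _ Hm B HB n y). unfold D0. lra. }
  destruct (INR_archimed eps (2 * D0) He) as [k Hk].
  destruct (ss_iter k x0 Cx0) as [y' [Cy' Hy']].
  exists y'. split; auto.
  specialize (Hn (2 ^ k)%nat). rewrite pow_INR in Hn. replace (INR 2) with 2 in Hn by (simpl; lra).
  pose proof (pow2_ge k). 
  assert (0 < 2 ^ k) by (apply pow_lt; lra).
  assert (0 <= d y (B y)) by (apply dnn; auto).
  assert (0 <= d y' (B y')) by (apply dnn; auto).
  assert (INR k * eps <= 2 ^ k * eps) by (apply Rmult_le_compat_r; lra).
  assert (2 ^ k * (d y' (B y') - d y (B y) - eps) <= 2 ^ k * 0) by lra.
  apply Rmult_le_reg_l in H4; lra.
Qed.

Lemma conj_disp g k : d k (act (gmul G (ginv G g) (gmul G beta g)) k) = d (act g k) (B (act g k)).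
Proof.
  rewrite !(act_mul _ _ _ _ Ha). unfold B.
  rewrite <- (act_iso _ _ _ _ Ha g k). rewrite (act_inv_r _ _ _ _ Ha). auto.
Qed.

Lemma ss_main (Hpd : properly_discontinuous d act) (x0 : T) (Cx0 : C x0)
  (K : T -> Prop) (HK : Defs.compact d K)
  (Hcov : forall x, C x -> exists g y, K y /\ x = act g y)
  (Hinf : infinite_order beta) : hyperbolic d B.
Proof.
  set (E := fun r => exists x, r = - d x (B x)).
  assert (Hb : bound E).
  { exists 0. intros r [x ->]. pose proof (dnn _ _ Hm x (B x)). lra. }
  destruct (completeness E Hb (ex_intro _ _ (ex_intro _ x0 eq_refl))) as [L [HL1 HL2]].
  set (m := - L).
  assert (Hlow : forall x, m <= d x (B x)).
  { intro x. assert (E (- d x (B x))) by (exists x; auto). specialize (HL1 _ H). unfold m. lra. }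
  assert (Hm0 : 0 <= m).
  { assert (L <= 0). { apply HL2. intros r [x ->]. pose proof (dnn _ _ Hm x (B x)). lra. }
    unfold m; lra. }
  assert (Happ : forall eps, 0 < eps -> exists x, d x (B x) < m + eps).
  { intros eps He. apply NNPP. intro hn.
    assert (L <= L - eps).
    { apply HL2. intros r [x ->]. apply Rnot_lt_le. intro. apply hn. exists x. unfold m. lra. }
    lra. }
  assert (Hseq : forall n : nat, exists y, C y /\ d y (B y) <= m + / (INR n + 1)).
  { intro n. assert (0 < / (INR n + 1)) by (apply Rinv_0_lt_compat; pose proof (pos_INR n); lra).
    destruct (Happ (/ (INR n + 1) / 2)) as [x Hx]. lra.
    destruct (ss_approx x0 Cx0 x (/ (INR n + 1) / 2)) as [y [Cy Hy]]. lra.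
    exists y. split; auto. lra. }
  apply choice_fun in Hseq. destruct Hseq as [ys Hys].
  assert (Hgk : forall n, exists p : G * T, K (snd p) /\ ys n = act (fst p) (snd p)).
  { intro n. destruct (Hcov (ys n) (proj1 (Hys n))) as [g [y [Ky E1]]]. exists (g, y). auto. }
  apply choice_fun in Hgk. destruct Hgk as [gk Hgk].
  set (gs := fun n => fst (gk n)). set (ks := fun n => snd (gk n)).
  set (hs := fun n => gmul G (ginv G (gs n)) (gmul G beta (gs n))).
  assert (Hdisp : forall n, d (ks n) (act (hs n) (ks n)) <= m + / (INR n + 1)).
  { intro n. unfold hs. rewrite conj_disp. unfold gs, ks. rewrite <- (proj2 (Hgk n)). apply Hys. }
  destruct (compact_bounded _ _ Hm K HK x0) as [RK HRK].
  set (Kb := fun x => d x0 x <= RK + m + 2).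
  destruct (Hpd Kb (Hp x0 _)) as [Lh HLh].
  assert (Hin : forall n, In (hs n) Lh).
  { intro n. apply HLh. exists (ks n). unfold Kb. 
    assert (Kn : K (ks n)) by (apply (proj1 (Hgk n))).
    pose proof (HRK _ Kn). split. lra.
    pose proof (dtri _ _ Hm x0 (ks n) (act (hs n) (ks n))).
    pose proof (Hdisp n).
    assert (/ (INR n + 1) <= 1).
    { rewrite <- Rinv_1. apply Rinv_le_contravar. lra. pose proof (pos_INR n); lra. }
    lra. }
  destruct (HK ks (fun n => proj1 (Hgk n))) as [phi [kst [Hphi [Kst Hconvg]]]].
  destruct (pigeon_inf Lh (fun n => hs (phi n)) 0 (fun n _ => Hin (phi n))) as [h Hh].
  assert (Hdk : d kst (act h kst) <= m).
  { apply Rle_plus_epsilon. intros eps He.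
    destruct (Hconvg (eps / 3)) as [N1 HN1]. lra.
    destruct (INR_archimed (eps / 3) 1) as [N2 HN2]. lra.
    destruct (Hh (Nat.max N1 N2)) as [n [Hn Hhn]]. cbv beta in Hhn.
    specialize (HN1 n ltac:(lia)).
    pose proof (Hdisp (phi n)) as Hd. rewrite Hhn in Hd.
    pose proof (incr_ge phi Hphi n) as Hpn.
    assert (Hle : INR N2 <= INR (phi n)) by (apply le_INR; lia).
    assert (Hiv : / (INR (phi n) + 1) < eps / 3).
    { assert (0 < INR (phi n) + 1) by (pose proof (pos_INR (phi n)); lra).
      apply (Rmult_lt_reg_l (INR (phi n) + 1)). lra.
      rewrite Rinv_r by lra. nra. }
    pose proof (dtri _ _ Hm kst (ks (phi n)) (act h kst)) as T1.
    pose proof (dtri _ _ Hm (ks (phi n)) (act h (ks (phi n))) (act h kst)) as T2.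
    rewrite (act_iso _ _ _ _ Ha) in T2.
    rewrite (dsym _ _ Hm kst (ks (phi n))) in T1.
    lra. }
  destruct (Hh 0%nat) as [n0 [_ Hn0]]. cbv beta in Hn0.
  exists (act (gs (phi n0)) kst).
  rewrite <- conj_disp. fold (hs (phi n0)). rewrite Hn0.
  split.
  - destruct (Rle_lt_dec (d kst (act h kst)) 0) as [hz|hz]; auto. exfalso.
    assert (Ez : act h kst = kst).
    { symmetry. apply (deq _ _ Hm). pose proof (dnn _ _ Hm kst (act h kst)). lra. }
    set (ystar := act (gs (phi n0)) kst).
    assert (Fx : B ystar = ystar).
    { apply (act_inj _ _ _ _ Ha (ginv G (gs (phi n0)))).
      unfold ystar. rewrite (act_inv_l _ _ _ _ Ha).
      rewrite <- Ez at 2. rewrite <- Hn0. unfold hs.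
      rewrite !(act_mul _ _ _ _ Ha). auto. }
    assert (Hpow : forall n, act (gpow G beta n) ystar = ystar).
    { intro n. rewrite (act_gpow _ _ _ _ Ha). induction n; simpl; auto.
      rewrite IHn. apply Fx. }
    destruct (Hpd (fun x => x = ystar) (singleton_compact _ _ Hm ystar)) as [L2 HL2'].
    destruct (pigeon2 L2 (fun n => gpow G beta n)) as [i [j [Hij Eij]]].
    { intro n. apply HL2'. exists ystar. split; auto. }
    exact (finite_order_of G beta i j Hij Eij Hinf).
  - intro x. eapply Rle_trans. exact Hdk. apply Hlow.
Qed.
End SS.

Lemma mink_core a a' b b' D1 D2 p q :
  0 <= a -> 0 <= a' -> 0 <= b -> 0 <= b' -> 0 <= D1 -> 0 <= D2 -> 0 <= p -> 0 <= q ->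
  a^2 + a'^2 = p^2 -> b^2 + b'^2 = q^2 -> D1^2 + D2^2 = (p + q)^2 ->
  D1 <= a + b -> D2 <= a' + b' -> D1 = a + b /\ a * q = b * p.
Proof.
  intros Ha Ha' Hb Hb' HD1 HD2 Hp Hq H7 H8 H9 H10 H11.
  set (S := a * b + a' * b').
  assert (Sum : (a+b)^2 + (a'+b')^2 = p^2 + q^2 + 2 * S).
  { rewrite <- H7, <- H8. unfold S. ring. }
  assert (Q1 : D1^2 <= (a+b)^2) by nra. assert (Q2 : D2^2 <= (a'+b')^2) by nra.
  assert (HS1 : p * q <= S).
  { assert (E : (p+q)^2 = p^2+q^2+2*(p*q)) by ring. lra. }
  assert (Lag : p^2 * q^2 - S^2 = (a * b' - a' * b)^2).
  { rewrite <- H7, <- H8. unfold S. ring. }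
  assert (HS2 : S <= p * q).
  { assert (0 <= S) by (unfold S; apply Rplus_le_le_0_compat; apply Rmult_le_pos; auto).
    assert (S^2 <= (p*q)^2).
    { assert (0 <= (a * b' - a' * b)^2) by (apply pow2_ge_0).
      replace ((p*q)^2) with (p^2*q^2) by ring. lra. }
    apply sq_le_nonneg; auto. apply Rmult_le_pos; auto. }
  assert (ES : S = p * q) by lra.
  assert (Ecr : a * b' = a' * b).
  { assert ((a * b' - a' * b)^2 = 0) by (rewrite <- Lag, ES; ring). nra. }
  split.
  - assert (E3 : (a+b)^2 + (a'+b')^2 = (p+q)^2) by (rewrite Sum, ES; ring).
    assert (D1^2 = (a+b)^2) by lra. nra.
  - assert ((a*q)^2 = (b*p)^2).
    { replace ((a*q)^2) with (a^2 * q^2) by ring. rewrite <- H8.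
      replace ((b*p)^2) with (b^2 * p^2) by ring. rewrite <- H7.
      replace (a^2 * (b^2 + b'^2)) with (a^2*b^2 + (a*b')^2) by ring.
      rewrite Ecr. ring. }
    nra.
Qed.

Lemma speed_abs (F F2 : R -> R -> R) :
  (forall a b, 0 <= F a b) -> (forall a b, 0 <= F2 a b) ->
  (forall a u b, F a b <= F a u + F u b) -> (forall a u b, F2 a b <= F2 a u + F2 u b) ->
  (forall a b, F a b = F b a) ->
  (forall a b, F a b ^ 2 + F2 a b ^ 2 = (a - b) ^ 2) ->
  forall s t, F s t = F 0 1 * Rabs (s - t).
Proof.
  intros F0 F20 Ft F2t Fs Fq.
  assert (P : forall a u b, a < u < b ->
     F a u * (b - u) = F u b * (u - a) /\ F a b = F a u + F u b).
  { intros a u b Hr.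
    destruct (mink_core (F a u) (F2 a u) (F u b) (F2 u b) (F a b) (F2 a b) (u - a) (b - u))
      as [E1 E2]; auto; try lra.
    - rewrite Fq. ring.
    - rewrite Fq. ring.
    - rewrite Fq. ring. }
  assert (P1 : forall a u b, a < u < b -> F u b * (b - a) = F a b * (b - u)).
  { intros a u b Hr. destruct (P a u b Hr) as [E1 E2]. rewrite E2. nra. }
  assert (P2 : forall a u b, a < u < b -> F a u * (b - a) = F a b * (u - a)).
  { intros a u b Hr. destruct (P a u b Hr) as [E1 E2]. rewrite E2. nra. }
  assert (Lin : forall a b, a < b -> F a b = F 0 1 * (b - a)).
  { intros a b Hab.
    set (S := Rmin a 0 - 1). set (U := Rmax b 1 + 1).
    assert (S < a) by (unfold S; pose proof (Rmin_l a 0); lra).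
    assert (S < 0) by (unfold S; pose proof (Rmin_r a 0); lra).
    assert (b < U) by (unfold U; pose proof (Rmax_l b 1); lra).
    assert (1 < U) by (unfold U; pose proof (Rmax_r b 1); lra).
    pose proof (P1 S a b ltac:(lra)) as Q1.
    pose proof (P2 S b U ltac:(lra)) as Q2.
    pose proof (P1 S 0 1 ltac:(lra)) as Q3.
    pose proof (P2 S 1 U ltac:(lra)) as Q4.
    assert (F a b = F S U * (b - a) / (U - S)).
    { apply (Rmult_eq_reg_r (b - S)); [| lra].
      rewrite Q1. unfold Rdiv. 
      apply (Rmult_eq_reg_r (U - S)); [| lra].
      replace (F S b * (b - a) * (U - S)) with ((F S b * (U - S)) * (b - a)) by ring.
      rewrite Q2. field. lra. }
    assert (F 0 1 = F S U / (U - S)).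
    { apply (Rmult_eq_reg_r (1 - S)); [| lra].
      rewrite Q3. apply (Rmult_eq_reg_r (U - S)); [| lra].
      replace (F S 1 * (1 - 0) * (U - S)) with (F S 1 * (U - S)) by ring.
      rewrite Q4. field. lra. }
    rewrite H3, H4. field. lra. }
  intros s t. destruct (Rtotal_order s t) as [h|[h|h]].
  - rewrite Lin by auto. rewrite Rabs_left by lra. ring.
  - subst. assert (F t t = 0). { pose proof (Fq t t). rewrite Rminus_diag in H. 
      pose proof (F0 t t). pose proof (F20 t t). nra. }
    rewrite H, Rminus_diag, Rabs_R0. ring.
  - rewrite Fs, Lin by auto. rewrite Rabs_right by lra. ring.
Qed.

Section Prod.
Variables (X1 X2 : Type) (d1 : X1 -> X1 -> R) (d2 : X2 -> X2 -> R).
Hypothesis Hm1 : is_metric d1.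
Hypothesis Hm2 : is_metric d2.
Let D := dprod d1 d2.

Lemma dprod_nn p q : 0 <= D p q. Proof. apply sqrt_pos. Qed.

Lemma dprod_sq p q : D p q ^ 2 = d1 (fst p) (fst q) ^ 2 + d2 (snd p) (snd q) ^ 2.
Proof. unfold D, dprod. rewrite pow2_sqrt; auto. nra. Qed.

Lemma dprod_ge1 p q : d1 (fst p) (fst q) <= D p q.
Proof.
  apply sq_le_nonneg. apply dnn; auto. apply dprod_nn. rewrite dprod_sq. nra.
Qed.
Lemma dprod_ge2 p q : d2 (snd p) (snd q) <= D p q.
Proof.
  apply sq_le_nonneg. apply dnn; auto. apply dprod_nn. rewrite dprod_sq. nra.
Qed.

Lemma dprod_refl p : D p p = 0.
Proof. unfold D, dprod. rewrite !d0 by auto. replace (0^2+0^2) with 0 by ring. apply sqrt_0. Qed.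

Lemma line_speeds l : geod_line D l ->
  (forall s t, d1 (fst (l s)) (fst (l t)) = d1 (fst (l 0)) (fst (l 1)) * Rabs (s - t)) /\
  (forall s t, d2 (snd (l s)) (snd (l t)) = d2 (snd (l 0)) (snd (l 1)) * Rabs (s - t)) /\
  d1 (fst (l 0)) (fst (l 1)) ^ 2 + d2 (snd (l 0)) (snd (l 1)) ^ 2 = 1.
Proof.
  intros Hl.
  assert (Q : forall a b, d1 (fst (l a)) (fst (l b)) ^ 2 + d2 (snd (l a)) (snd (l b)) ^ 2 = (a - b) ^ 2).
  { intros a b. rewrite <- dprod_sq. fold D. rewrite Hl. apply abs_eq_sq. apply Rabs_Rabsolu. }
  split; [|split].
  - apply (speed_abs (fun a b => d1 (fst (l a)) (fst (l b))) (fun a b => d2 (snd (l a)) (snd (l b))));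
      intros; try apply dnn; auto; try apply dtri; auto; try apply dsym; auto.
  - apply (speed_abs (fun a b => d2 (snd (l a)) (snd (l b))) (fun a b => d1 (fst (l a)) (fst (l b))));
      intros; try apply dnn; auto; try apply dtri; auto; try apply dsym; auto.
    rewrite <- (Q a b). ring.
  - rewrite Q. ring.
Qed.

Lemma slp_eq l l' : geod_line D l -> geod_line D l' ->
  d1 (fst (l 0)) (fst (l 1)) = d1 (fst (l' 0)) (fst (l' 1)) ->
  d2 (snd (l 0)) (snd (l 1)) = d2 (snd (l' 0)) (snd (l' 1)) ->
  slp d1 d2 l = slp d1 d2 l'.
Proof.
  intros Hl Hl' E1 E2.
  destruct (line_speeds l Hl) as [_ [S2 _]].
  destruct (line_speeds l' Hl') as [_ [S2' _]].
  assert (Zc : forall m : R -> X1 * X2, 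
     (forall s t, d2 (snd (m s)) (snd (m t)) = d2 (snd (m 0)) (snd (m 1)) * Rabs (s - t)) ->
     (d2 (snd (m 0)) (snd (m 1)) = 0 <-> (forall t, 0 <= t -> snd (m t) = snd (m 0)))).
  { intros m Sm. split.
    - intros Z t _. apply (deq _ _ Hm2). rewrite Sm, Z. ring.
    - intros H. rewrite (H 1) by lra. apply d0; auto. }
  unfold slp.
  destruct (excluded_middle_informative (forall t, 0 <= t -> snd (l t) = snd (l 0))) as [h|h];
  destruct (excluded_middle_informative (forall t, 0 <= t -> snd (l' t) = snd (l' 0))) as [h'|h'];
  auto.
  - exfalso. apply h'. apply (Zc l' S2'). rewrite <- E2. apply (Zc l S2). auto.
  - exfalso. apply h. apply (Zc l S2). rewrite E2. apply (Zc l' S2'). auto.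
  - rewrite E1, E2. auto.
Qed.

Lemma hyp_prod f1 f2 : hyperbolic d1 f1 -> hyperbolic d2 f2 ->
  hyperbolic D (fun p => (f1 (fst p), f2 (snd p))).
Proof.
  intros [x1 [P1 M1]] [x2 [P2 M2]]. exists (x1, x2). split.
  - unfold D, dprod. simpl. apply sqrt_lt_R0. nra.
  - intros [y1 y2]. unfold D, dprod. simpl. apply sqrt_le_1_alt.
    specialize (M1 y1). specialize (M2 y2). 
    assert (d1 x1 (f1 x1) ^ 2 <= d1 y1 (f1 y1) ^ 2) by (apply pow_incr; lra).
    assert (d2 x2 (f2 x2) ^ 2 <= d2 y2 (f2 y2) ^ 2) by (apply pow_incr; lra).
    lra.
Qed.
End Prod.

Lemma dprod_metric {X1 X2 : Type} (d1 : X1 -> X1 -> R) (d2 : X2 -> X2 -> R) :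
  is_metric d1 -> is_metric d2 -> is_metric (dprod d1 d2).
Proof.
  intros H1 H2. split; [|split; [|split]].
  - intros; apply sqrt_pos.
  - intros p q. split.
    + intros E. assert (E2 : dprod d1 d2 p q ^ 2 = 0) by (rewrite E; ring).
      rewrite dprod_sq in E2 by auto.
      pose proof (dnn _ _ H1 (fst p) (fst q)). pose proof (dnn _ _ H2 (snd p) (snd q)).
      assert (d1 (fst p) (fst q) = 0) by nra. assert (d2 (snd p) (snd q) = 0) by nra.
      destruct p, q. simpl in *. f_equal; eapply deq; eauto.
    + intros ->. apply dprod_refl; auto.
  - intros. unfold dprod. rewrite (dsym _ _ H1 (fst x)), (dsym _ _ H2 (snd x)). auto.
  - intros x y z. 
    set (a1 := d1 (fst x) (fst y)). set (b1 := d1 (fst y) (fst z)).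
    set (a2 := d2 (snd x) (snd y)). set (b2 := d2 (snd y) (snd z)).
    pose proof (dtri _ _ H1 (fst x) (fst y) (fst z)) as T1. pose proof (dtri _ _ H2 (snd x) (snd y) (snd z)) as T2.
    fold a1 b1 in T1. fold a2 b2 in T2.
    pose proof (dnn _ _ H1 (fst x) (fst z)) as N1. pose proof (dnn _ _ H2 (snd x) (snd z)) as N2.
    assert (0 <= a1) by apply dnn, H1. assert (0 <= b1) by apply dnn, H1.
    assert (0 <= a2) by apply dnn, H2. assert (0 <= b2) by apply dnn, H2.
    apply sq_le_nonneg. apply sqrt_pos. 
    apply Rplus_le_le_0_compat; apply sqrt_pos.
    rewrite dprod_sq by auto.
    unfold dprod. fold a1 b1 a2 b2.
    pose proof (sqrt_cauchy a1 a2 b1 b2) as H7.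
    assert (0 <= a1^2 + a2^2) by nra. assert (0 <= b1^2 + b2^2) by nra.
    replace ((sqrt (a1^2 + a2^2) + sqrt (b1^2 + b2^2))^2) with
      (sqrt (a1^2 + a2^2) ^2 + sqrt (b1^2 + b2^2) ^ 2 + 2 * (sqrt (a1 ^ 2 + a2 ^ 2) * sqrt (b1 ^ 2 + b2 ^ 2))) by ring.
    rewrite !pow2_sqrt by auto.
    unfold Rsqr in H7. 
    replace (a1 * a1 + a2 * a2) with (a1^2 + a2^2) in H7 by ring.
    replace (b1 * b1 + b2 * b2) with (b1^2 + b2^2) in H7 by ring.
    assert (S1 : d1 (fst x) (fst z) ^ 2 <= (a1 + b1) ^ 2) by (apply pow_incr; lra).
    assert (S2 : d2 (snd x) (snd z) ^ 2 <= (a2 + b2) ^ 2) by (apply pow_incr; lra).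
    assert (E : (a1 + b1) ^ 2 + (a2 + b2) ^ 2 = a1^2 + a2^2 + (b1^2 + b2^2) + 2 * (a1 * b1 + a2 * b2)) by ring.
    lra.
Qed.

Lemma itr_trans {T : Type} (F : T -> T) (l : R -> T) sg :
  (forall t, F (l t) = l (t + sg)) -> forall k t, itr F k (l t) = l (t + INR k * sg).
Proof.
  intros H k; induction k; intro t; simpl itr.
  - f_equal. simpl. ring.
  - rewrite IHk, H. f_equal. rewrite S_INR. ring.
Qed.

Section Factor.
Variables (G : Group) (T : Type) (d : T -> T -> R) (act : G -> T -> T) (alpha beta : G).
Hypothesis Hc : CAT0 d.
Hypothesis Hp : proper_space d.
Hypothesis Ha : isometric_action d act.
Hypothesis Hpd : properly_discontinuous d act.
Hypothesis Hr : rank_one d (act alpha).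
Hypothesis Hf : fixes_axis_endpoints d (act alpha) (act beta).

Let Hm : is_metric d := cat_met _ _ Hc.

Lemma factor_commens : exists i j di ki dj kj, (i < j)%nat /\
  (di = alpha \/ di = ginv G alpha) /\ (dj = alpha \/ dj = ginv G alpha) /\
  gmul G (gpow G di ki) (gpow G beta i) = gmul G (gpow G dj kj) (gpow G beta j).
Proof.
  destruct Hr as [hypA [l0 [Hax0 Hcon0]]].
  pose proof Hax0 as [Hl0 [_ Hmin0]].
  set (a := act alpha). set (b := act beta).
  assert (Hia : forall x y, d (a x) (a y) = d x y) by apply (act_iso _ _ _ _ Ha).
  assert (Hib : forall x y, d (b x) (b y) = d x y) by apply (act_iso _ _ _ _ Ha).
  destruct (axis_translation _ _ Hm a l0 Hia hypA Hax0) as [t0 [Ht0 Tr0]].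
  destruct Hf as [l1 [Hax1 [[Cp HCp] [Cm HCm]]]].
  pose proof Hax1 as [Hl1 [_ Hmin1]].
  destruct (axis_translation _ _ Hm a l1 Hia hypA Hax1) as [t1 [Ht1 Tr1]].
  assert (Eabs : Rabs t0 = Rabs t1).
  { pose proof (Hmin0 0 (l1 0)). pose proof (Hmin1 0 (l0 0)).
    rewrite Tr0, Tr1, Hl0, Hl1 in *. 
    replace (0 - (0 + t0)) with (- t0) in * by ring. replace (0 - (0 + t1)) with (- t1) in * by ring.
    rewrite !Rabs_Ropp in *. lra. }
  set (eps := t0 / t1).
  assert (Heps : eps * t1 = t0) by (unfold eps; field; auto).
  assert (Heps2 : eps * eps = 1).
  { apply abs_eq_sq in Eabs. unfold eps. field_simplify; auto. 
    replace (t0^2) with (t1^2) by lra. field. auto. }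
  assert (Habs : Rabs eps = 1).
  { assert (Rabs eps * Rabs eps = 1) by (rewrite <- Rabs_mult, Heps2; apply Rabs_R1).
    pose proof (Rabs_pos eps). nra. }
  set (f := fun t => d (l1 t) (l0 (eps * t))).
  assert (Hper : forall t, f (t + t1) = f t).
  { intro t. unfold f. replace (eps * (t + t1)) with (eps * t + t0) by (rewrite <- Heps; ring).
    rewrite <- Tr0, <- Tr1. apply Hia. }
  assert (Hpern : forall n t, f (t + INR n * t1) = f t).
  { induction n; intro t. simpl. f_equal; ring.
    rewrite S_INR. replace (t + (INR n + 1) * t1) with ((t + INR n * t1) + t1) by ring.
    rewrite Hper. auto. }
  assert (Hlip : forall u v, f u <= f v + 2 * Rabs (u - v)).
  { intros u v. unfold f.
    pose proof (dtri _ _ Hm (l1 u) (l1 v) (l0 (eps * u))).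
    pose proof (dtri _ _ Hm (l1 v) (l0 (eps * v)) (l0 (eps * u))).
    rewrite Hl1 in H. rewrite Hl0 in H0.
    replace (eps * v - eps * u) with (eps * (v - u)) in H0 by ring.
    rewrite Rabs_mult, Habs, <- Rabs_Ropp in H0. replace (- (v - u)) with (u - v) in H0 by ring.
    lra. }
  assert (Hbound : forall t, f t <= f 0 + 2 * Rabs t1).
  { intro t. destruct (exists_int_near t t1 Ht1) as [n [hn|hn]].
    - pose proof (Hlip t (INR n * t1)). pose proof (Hpern n 0).
      rewrite Rplus_0_l in H0. lra.
    - pose proof (Hlip t (- (INR n * t1))). pose proof (Hpern n (- (INR n * t1))).
      replace (- (INR n * t1) + INR n * t1) with 0 in H0 by ring.
      replace (t - - (INR n * t1)) with (t + INR n * t1) in H by ring. lra. }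
  set (Cb := Rmax Cp Cm).
  assert (Hb1 : forall t, d (b (l1 t)) (l1 t) <= Cb).
  { intro t. destruct (Rle_dec 0 t) as [h|h].
    - eapply Rle_trans. apply HCp; auto. apply Rmax_l.
    - eapply Rle_trans. 2: apply Rmax_r. specialize (HCm (- t) ltac:(lra)). cbv beta in HCm.
      rewrite Ropp_involutive in HCm. auto. }
  set (Mb := 2 * (f 0 + 2 * Rabs t1) + Cb).
  assert (HMb : forall s, d (b (l0 s)) (l0 s) <= Mb).
  { intro s.
    assert (Es : eps * (eps * s) = s) by (rewrite <- Rmult_assoc, Heps2; ring).
    pose proof (dtri _ _ Hm (b (l0 s)) (b (l1 (eps * s))) (l0 s)) as T1.
    pose proof (dtri _ _ Hm (b (l1 (eps * s))) (l1 (eps * s)) (l0 s)) as T2.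
    rewrite Hib in T1. pose proof (Hbound (eps * s)) as T3. pose proof (Hb1 (eps * s)) as T4.
    change (f (eps * s)) with (d (l1 (eps * s)) (l0 (eps * (eps * s)))) in T3. rewrite Es in T3. rewrite (dsym _ _ Hm (l0 s)) in T1. unfold Mb. lra. }
  assert (Hiter : forall n s, d (itr b n (l0 s)) (l0 s) <= INR n * Mb).
  { induction n; intro s; simpl itr.
    - rewrite d0 by auto. simpl. lra.
    - pose proof (dtri _ _ Hm (b (itr b n (l0 s))) (b (l0 s)) (l0 s)).
      rewrite Hib in H. rewrite S_INR. specialize (IHn s). specialize (HMb s). lra. }
  destruct (rank_one_close _ _ Hc l0 Hl0 Hcon0) as [K [HK Hclose]].
  assert (Hsn : forall n, exists s, d (itr b n (l0 0)) (l0 s) <= K).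
  { intro n. apply (Hclose (fun t => itr b n (l0 t))).
    - intros u v. rewrite (iter_iso _ _ b Hib). apply Hl0.
    - exists (INR n * Mb). intro t. apply Hiter. }
  assert (Tra : forall t, act alpha (l0 t) = l0 (t + t0)) by exact Tr0.
  assert (Trv : forall t, act (ginv G alpha) (l0 t) = l0 (t + - t0)).
  { intro t. replace t with ((t + - t0) + t0) at 1 by ring. rewrite <- Tr0.
    apply (act_inv_l _ _ _ _ Ha). }
  set (p := l0 0).
  assert (Hcase : forall n s k del sg, (forall t, act del (l0 t) = l0 (t + sg)) ->
      d (itr b n (l0 0)) (l0 s) <= K -> Rabs (s + INR k * sg) <= Rabs t0 ->
      d p (act (gmul G (gpow G del k) (gpow G beta n)) p) <= K + Rabs t0).
  { intros n s k del sg Htr H1 H2. unfold p.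
    rewrite (act_mul _ _ _ _ Ha), !(act_gpow _ _ _ _ Ha).
    pose proof (dtri _ _ Hm (l0 0) (itr (act del) k (l0 s)) (itr (act del) k (itr (act beta) n (l0 0)))).
    rewrite (iter_iso _ _ (act del) (act_iso _ _ _ _ Ha del)) in H.
    rewrite (itr_trans _ _ _ Htr) in H. rewrite Hl0 in H.
    replace (0 - (s + INR k * sg)) with (- (s + INR k * sg)) in H by ring.
    rewrite Rabs_Ropp in H. rewrite (dsym _ _ Hm (l0 s)) in H. fold b in H. fold b. lra. }
  assert (Hg : forall n, exists g, (exists del k, (del = alpha \/ del = ginv G alpha) /\
      g = gmul G (gpow G del k) (gpow G beta n)) /\ d p (act g p) <= K + Rabs t0).
  { intro n. destruct (Hsn n) as [s Hs]. destruct (exists_int_near s t0 Ht0) as [k [hk|hk]].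
    - exists (gmul G (gpow G (ginv G alpha) k) (gpow G beta n)). split.
      + exists (ginv G alpha), k. auto.
      + apply (Hcase n s k _ (- t0) Trv Hs). replace (s + INR k * - t0) with (s - INR k * t0) by ring. auto.
    - exists (gmul G (gpow G alpha k) (gpow G beta n)). split.
      + exists alpha, k. auto.
      + apply (Hcase n s k _ t0 Tra Hs hk). }
  apply choice_fun in Hg. destruct Hg as [gs Hgs].
  destruct (Hpd (fun x => d p x <= K + Rabs t0) (Hp p _)) as [L HL].
  destruct (pigeon2 L gs) as [i [j [Hij Eij]]].
  { intro n. apply HL. exists p. split. rewrite d0 by auto. pose proof (Rabs_pos t0). lra.
    apply (proj2 (Hgs n)). }
  destruct (proj1 (Hgs i)) as [di [ki [Hdi Ei]]].
  destruct (proj1 (Hgs j)) as [dj [kj [Hdj Ej]]].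
  exists i, j, di, ki, dj, kj. split; auto. split; auto. split; auto. congruence.
Qed.
End Factor.

Lemma quad_ineq {T} (d : T -> T -> R) : is_metric d -> forall x x' y y',
  Rabs (d x x' - d y y') <= d x y + d x' y'.
Proof.
  intros Hm x x' y y'.
  pose proof (dtri _ _ Hm x y x'). pose proof (dtri _ _ Hm y y' x').
  pose proof (dtri _ _ Hm y x y'). pose proof (dtri _ _ Hm x x' y').
  rewrite (dsym _ _ Hm y' x') in H0. rewrite (dsym _ _ Hm y x) in H1.
  unfold Rabs; destruct Rcase_abs; lra.
Qed.

Theorem lemma3p4 (G : Group) (X1 X2 : Type)
  (d1 : X1 -> X1 -> R) (d2 : X2 -> X2 -> R)
  (rho1 : G -> X1 -> X1) (rho2 : G -> X2 -> X2) (alpha beta : G) :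
  CAT0 d1 -> proper_space d1 -> CAT0 d2 -> proper_space d2 ->
  infinite_group G ->
  convex_cocompact d1 rho1 -> convex_cocompact d2 rho2 ->
  convex_cocompact (dprod d1 d2) (diag_act rho1 rho2) ->
  rank_one d1 (rho1 alpha) -> rank_one d2 (rho2 alpha) ->
  infinite_order beta ->
  fixes_axis_endpoints d1 (rho1 alpha) (rho1 beta) ->
  fixes_axis_endpoints d2 (rho2 alpha) (rho2 beta) ->
  hyperbolic (dprod d1 d2) (diag_act rho1 rho2 alpha) /\
  hyperbolic (dprod d1 d2) (diag_act rho1 rho2 beta) /\
  forall la lb : R -> X1 * X2,
    is_axis (dprod d1 d2) (diag_act rho1 rho2 alpha) la ->
    is_axis (dprod d1 d2) (diag_act rho1 rho2 beta) lb ->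
    slp d1 d2 lb = slp d1 d2 la.
Proof.
  intros Hc1 Hp1 Hc2 Hp2 _ Hcc1 Hcc2 Hccp Hr1 Hr2 Hinfb Hf1 Hf2.
  pose proof (cat_met _ _ Hc1) as Hm1. pose proof (cat_met _ _ Hc2) as Hm2.
  pose proof (dprod_metric d1 d2 Hm1 Hm2) as HmP.
  destruct Hcc1 as [Ha1 [Hpd1 [C1 [[x1 Cx1] [_ [Hconv1 [Hinv1 [K1 [HK1 [_ Hcov1]]]]]]]]]].
  destruct Hcc2 as [Ha2 [Hpd2 [C2 [[x2 Cx2] [_ [Hconv2 [Hinv2 [K2 [HK2 [_ Hcov2]]]]]]]]]].
  destruct Hccp as [HaP _].
  pose proof (proj1 Hr1) as hA1. pose proof (proj1 Hr2) as hA2.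
  pose proof (ss_main G X1 d1 rho1 beta Hc1 Hp1 Ha1 C1 Hconv1 Hinv1 Hpd1 x1 Cx1 K1 HK1 Hcov1 Hinfb) as hB1.
  pose proof (ss_main G X2 d2 rho2 beta Hc2 Hp2 Ha2 C2 Hconv2 Hinv2 Hpd2 x2 Cx2 K2 HK2 Hcov2 Hinfb) as hB2.
  pose proof (hyp_prod X1 X2 d1 d2 _ _ hA1 hA2) as hypA.
  pose proof (hyp_prod X1 X2 d1 d2 _ _ hB1 hB2) as hypB.
  split; [exact hypA|split; [exact hypB|]].
  intros la lb Hla Hlb.
  set (act := diag_act rho1 rho2).
  assert (isoP : forall g x y, dprod d1 d2 (act g x) (act g y) = dprod d1 d2 x y)
    by apply (act_iso _ _ _ _ HaP).
  destruct (axis_translation _ _ HmP (act alpha) la (isoP alpha) hypA Hla) as [tA [HtA TrA]].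
  destruct (axis_translation _ _ HmP (act beta) lb (isoP beta) hypB Hlb) as [tB [HtB TrB]].
  destruct (factor_commens G X1 d1 rho1 alpha beta Hc1 Hp1 Ha1 Hpd1 Hr1 Hf1)
    as [i [j [di [ki [dj [kj [Hij [Hdi [Hdj Eg]]]]]]]]].
  assert (Trd : forall del, del = alpha \/ del = ginv G alpha ->
     exists sg, forall t, act del (la t) = la (t + sg)).
  { intros del [->| ->].
    - exists tA. exact TrA.
    - exists (- tA). intro t. replace t with ((t + - tA) + tA) at 1 by ring.
      rewrite <- TrA. apply (act_inv_l _ _ _ _ HaP). }
  destruct (Trd di Hdi) as [sgi Tri]. destruct (Trd dj Hdj) as [sgj Trj].
  set (B := act beta).
  assert (Hmap : forall z, itr (act di) ki (itr B i z) = itr (act dj) kj (itr B j z)).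
  { intro z. unfold B. rewrite <- !(act_gpow _ _ _ _ HaP), <- !(act_mul _ _ _ _ HaP).
    rewrite Eg. auto. }
  set (N := (j - i)%nat).
  set (TA := INR ki * sgi - INR kj * sgj).
  assert (HN : forall t, itr B N (la t) = la (t + TA)).
  { intro t. destruct (iter_act_surj _ _ _ _ HaP beta i (la t)) as [z Hz].
    pose proof (Hmap z) as Mz. fold act in Hz. fold B in Hz. rewrite Hz in Mz.
    replace j with (N + i)%nat in Mz by (unfold N; lia).
    rewrite iter_add, Hz in Mz.
    rewrite (itr_trans _ _ _ Tri) in Mz.
    apply (iso_inj _ _ HmP (itr (act dj) kj) (iter_iso _ _ _ (isoP dj) kj)).
    rewrite <- Mz, (itr_trans _ _ _ Trj). f_equal. unfold TA. ring. }
  assert (Pa : forall k, itr B (k * N) (la 0) = la (0 + INR k * TA)).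
  { intro k. rewrite iter_mul. apply itr_trans. exact HN. }
  assert (Pb : forall k, itr B (k * N) (lb 0) = lb (0 + INR (k * N) * tB)).
  { intro k. apply itr_trans. exact TrB. }
  set (E0 := dprod d1 d2 (la 0) (lb 0)).
  assert (Dk : forall k, dprod d1 d2 (la (0 + INR k * TA)) (lb (0 + INR (k * N) * tB)) = E0).
  { intro k. rewrite <- Pa, <- Pb. apply iter_iso. apply isoP. }
  destruct (line_speeds _ _ _ _ Hm1 Hm2 la (proj1 Hla)) as [SA1 [SA2 SA3]].
  destruct (line_speeds _ _ _ _ Hm1 Hm2 lb (proj1 Hlb)) as [SB1 [SB2 SB3]].
  set (va1 := d1 (fst (la 0)) (fst (la 1))) in *.
  set (va2 := d2 (snd (la 0)) (snd (la 1))) in *.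
  set (vb1 := d1 (fst (lb 0)) (fst (lb 1))) in *.
  set (vb2 := d2 (snd (lb 0)) (snd (lb 1))) in *.
  assert (Hva1 : 0 <= va1) by (apply dnn; auto).
  assert (Hva2 : 0 <= va2) by (apply dnn; auto).
  assert (Hvb1 : 0 <= vb1) by (apply dnn; auto).
  assert (Hvb2 : 0 <= vb2) by (apply dnn; auto).
  assert (C1eq : va1 * Rabs TA = vb1 * (INR N * Rabs tB)).
  { apply (nat_mul_eq _ _ (2 * E0)). intro k.
    pose proof (quad_ineq d1 Hm1 (fst (la (0 + INR k * TA))) (fst (la 0))
                  (fst (lb (0 + INR (k * N) * tB))) (fst (lb 0))) as Q.
    rewrite SA1, SB1 in Q.
    pose proof (dprod_ge1 _ _ d1 d2 Hm1 (la (0 + INR k * TA)) (lb (0 + INR (k * N) * tB))) as G1.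
    pose proof (dprod_ge1 _ _ d1 d2 Hm1 (la 0) (lb 0)) as G2.
    rewrite Dk in G1. fold E0 in G2.
    replace (0 + INR k * TA - 0) with (INR k * TA) in Q by ring.
    replace (0 + INR (k * N) * tB - 0) with (INR k * (INR N * tB)) in Q by (rewrite mult_INR; ring).
    rewrite !Rabs_mult, (Rabs_right (INR k)), (Rabs_right (INR N)) in Q by (apply Rle_ge, pos_INR).
    replace (va1 * (INR k * Rabs TA) - vb1 * (INR k * (INR N * Rabs tB)))
      with (INR k * (va1 * Rabs TA) - INR k * (vb1 * (INR N * Rabs tB))) in Q by ring.
    lra. }
  assert (C2eq : va2 * Rabs TA = vb2 * (INR N * Rabs tB)).
  { apply (nat_mul_eq _ _ (2 * E0)). intro k.
    pose proof (quad_ineq d2 Hm2 (snd (la (0 + INR k * TA))) (snd (la 0))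
                  (snd (lb (0 + INR (k * N) * tB))) (snd (lb 0))) as Q.
    rewrite SA2, SB2 in Q.
    pose proof (dprod_ge2 _ _ d1 d2 Hm2 (la (0 + INR k * TA)) (lb (0 + INR (k * N) * tB))) as G1.
    pose proof (dprod_ge2 _ _ d1 d2 Hm2 (la 0) (lb 0)) as G2.
    rewrite Dk in G1. fold E0 in G2.
    replace (0 + INR k * TA - 0) with (INR k * TA) in Q by ring.
    replace (0 + INR (k * N) * tB - 0) with (INR k * (INR N * tB)) in Q by (rewrite mult_INR; ring).
    rewrite !Rabs_mult, (Rabs_right (INR k)), (Rabs_right (INR N)) in Q by (apply Rle_ge, pos_INR).
    replace (va2 * (INR k * Rabs TA) - vb2 * (INR k * (INR N * Rabs tB)))
      with (INR k * (va2 * Rabs TA) - INR k * (vb2 * (INR N * Rabs tB))) in Q by ring.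
    lra. }
  set (Qv := INR N * Rabs tB) in *.
  assert (HQ : 0 < Qv).
  { unfold Qv. apply Rmult_lt_0_compat. apply lt_0_INR. unfold N; lia.
    apply Rabs_pos_lt; auto. }
  assert (HTA : Rabs TA = Qv).
  { apply sq_eq_nonneg. apply Rabs_pos. lra.
    assert (Rabs TA ^ 2 * (va1 ^ 2 + va2 ^ 2) = Qv ^ 2 * (vb1 ^ 2 + vb2 ^ 2)).
    { replace (Rabs TA ^ 2 * (va1 ^ 2 + va2 ^ 2)) with ((va1 * Rabs TA)^2 + (va2 * Rabs TA)^2) by ring.
      rewrite C1eq, C2eq. ring. }
    rewrite SA3, SB3 in H. lra. }
  rewrite HTA in C1eq, C2eq.
  assert (E1 : va1 = vb1) by (apply (Rmult_eq_reg_r Qv); lra).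
  assert (E2 : va2 = vb2) by (apply (Rmult_eq_reg_r Qv); lra).
  symmetry. apply (slp_eq _ _ _ _ Hm1 Hm2 la lb (proj1 Hla) (proj1 Hlb)); auto.
Qed.
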